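(* Let $X\subseteq\Omega$ be club in $\Omega$ with $0\notin X$, and $n<\omega$. If $\xi\in X$ and $\xi<\Theta_X(\Omega_n)$, then there is $\zeta<\Omega_n$ such that $\xi=\Theta_X(\zeta)$.
   Context: $\Omega$ is the first uncountable ordinal; $\varepsilon_{\Omega+1}$ the least $\varepsilon>\Omega$ with $\omega^\varepsilon=\varepsilon$. $\Omega_0=1$, $\Omega_{n+1}=\Omega^{\Omega_n}$. Every $0<\xi<\varepsilon_{\Omega+1}$ has a unique $\Omega$-normal form $\xi=\Omega^{\alpha}\beta+\gamma$ with $0<\beta<\Omega$, $\gamma<\Omega^{\alpha}$; $C(0)=\{0\}$, $C(\Omega^\alpha\beta+\gamma)=C(\alpha)\cup C(\gamma)\cup\{\beta\}$; $\xi^*=\max C(\xi)$. $\Theta_X(\xi)$ is defined by recursion on $\xi<\varepsilon_{\Omega+1}$ as the least $\theta\in X$ with $\theta>\xi^*$ such that every $\zeta<\xi$ with $\zeta^*<\theta$ satisfies $\Theta_X(\zeta)<\theta$. *)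

(* Defs.v *)
(* Model:
   - Omega (the first uncountable ordinal) is an abstract type W with a strict
     order lt that is a well-order, uncountable, and all of whose proper
     initial segments are countable (this characterises omega_1 up to iso).
   - Ordinals below eps_{Omega+1} are represented by their Omega-normal forms
     xi = Omega^a * b + c, as terms of the inductive type ON W. *)
From Stdlib Require Import ClassicalEpsilon.

Set Implicit Arguments.

Section Defs.
Variable W : Type.
Variable lt : W -> W -> Prop.

Definition countableW (A : W -> Prop) : Prop :=
  exists f : W -> nat, forall x y, A x -> A y -> f x = f y -> x = y.

Definition is_first_uncountable : Prop :=
  (forall x, ~ lt x x) /\
  (forall x y z, lt x y -> lt y z -> lt x z) /\
  (forall x y, lt x y \/ x = y \/ lt y x) /\
  well_founded lt /\
  ~ countableW (fun _ => True) /\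
  (forall w, countableW (fun v => lt v w)).

Definition is_zeroW (z0 : W) : Prop := forall w, ~ lt w z0.
Definition is_oneW (z0 o1 : W) : Prop :=
  lt z0 o1 /\ forall w, lt z0 w -> w = o1 \/ lt o1 w.

Definition unboundedW (X : W -> Prop) : Prop :=
  forall a, exists x, X x /\ lt a x.
Definition closedW (X : W -> Prop) : Prop :=
  forall l, (exists a, lt a l) ->
    (forall a, lt a l -> exists x, X x /\ lt a x /\ lt x l) -> X l.
Definition clubW (X : W -> Prop) : Prop := closedW X /\ unboundedW X.

(* Omega-normal forms: ONZ = 0, ONP a b c = Omega^a * b + c *)
Inductive ON : Type :=
| ONZ : ON
| ONP : ON -> W -> ON -> ON.

Fixpoint onlt (x y : ON) : Prop :=
  match x, y with
  | ONZ, ONZ => False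
  | ONZ, ONP _ _ _ => True
  | ONP _ _ _, ONZ => False
  | ONP a b c, ONP a' b' c' =>
      onlt a a' \/ (a = a' /\ (lt b b' \/ (b = b' /\ onlt c c')))
  end.

(* well-formed normal forms: 0 < b < Omega and c < Omega^a *)
Fixpoint onvalid (z0 : W) (x : ON) : Prop :=
  match x with
  | ONZ => True
  | ONP a b c =>
      onvalid z0 a /\ lt z0 b /\ onvalid z0 c /\
      match c with
      | ONZ => True
      | ONP a' _ _ => onlt a' a
      end
  end.

Definition maxW (a b : W) : W :=
  if excluded_middle_informative (lt a b) then b else a.

(* xi^* = max C(xi), with C(0) = {0}, C(Omega^a b + c) = C(a) u C(c) u {b} *)
Fixpoint star (z0 : W) (x : ON) : W :=
  match x with
  | ONZ => z0
  | ONP a b c => maxW (maxW (star z0 a) (star z0 c)) b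
  end.

Fixpoint Omega_n (o1 : W) (n : nat) : ON :=
  match n with
  | O => ONP ONZ o1 ONZ
  | S k => ONP (Omega_n o1 k) o1 ONZ
  end.

Definition leastW (P : W -> Prop) (x : W) : Prop :=
  P x /\ forall y, P y -> ~ lt y x.

(* Th satisfies the recursive definition of Theta_X on all xi < eps_{Omega+1}:
   Th xi is the least theta in X with theta > xi^* such that every zeta < xi
   with zeta^* < theta satisfies Th zeta < theta. *)
Definition Theta_spec (z0 : W) (X : W -> Prop) (Th : ON -> W) : Prop :=
  forall xi, onvalid z0 xi ->
    leastW (fun th => X th /\ lt (star z0 xi) th /\
              forall zeta, onvalid z0 zeta -> onlt zeta xi ->
                lt (star z0 zeta) th -> lt (Th zeta) th)
           (Th xi).
End Defs.

(* Main.v *)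
Require Import Defs.
From Stdlib Require Import ClassicalEpsilon Classical.

Section H.
Variable W : Type.
Variable lt : W -> W -> Prop.
Variable z0 : W.
Hypothesis ltrans : forall x y z, lt x y -> lt y z -> lt x z.
Hypothesis Hwf : well_founded lt.

Lemma onlt_trans : forall x y z : ON W, onlt lt x y -> onlt lt y z -> onlt lt x z.
Proof.
  induction x as [|a IHa b c IHc]; intros [|a' b' c'] [|a'' b'' c''] H1 H2; simpl in *; try tauto.
  destruct H1 as [H1|[E1 H1]]; destruct H2 as [H2|[E2 H2]]; subst.
  - left; eauto.
  - left; auto.
  - left; auto.
  - right; split; auto.
    destruct H1 as [H1|[E1 H1]]; destruct H2 as [H2|[E2 H2]]; subst; eauto.
Qed.

Definition R (y x : ON W) := onvalid lt z0 y /\ onlt lt y x.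

Lemma acc_ONZ : Acc R (ONZ W).
Proof. constructor; intros y [_ H]; destruct y; simpl in H; contradiction. Qed.

Definition exple (x a : ON W) :=
  match x with ONZ _ => True | ONP a' _ _ => a' = a \/ onlt lt a' a end.

Lemma main : forall a, Acc R a -> forall x, onvalid lt z0 x -> exple x a -> Acc R x.
Proof.
  intros a Ha. induction Ha as [a _ IH].
  assert (Hlt : forall x, onvalid lt z0 x ->
     (match x with ONZ _ => True | ONP a' _ _ => onlt lt a' a end) -> Acc R x).
  { intros [|a' b c] Hv He. apply acc_ONZ. simpl in Hv.
    apply (IH a'); [split; tauto | simpl; auto | simpl; auto]. }
  intros [|a' b c] Hv He; [apply acc_ONZ|].
  simpl in He. destruct He as [E|He]; [subst a'|apply Hlt; auto].
  simpl in Hv. destruct Hv as (Hva & Hb & Hvc & Hc).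
  assert (Hacc_c : Acc R c) by (apply Hlt; auto).
  clear Hb. revert c Hvc Hc Hacc_c.
  induction b as [b IHb] using (well_founded_induction Hwf).
  intros c Hvc Hc Hacc. revert Hvc Hc. induction Hacc as [c _ IHc]. intros Hvc Hc.
  constructor. intros [|a' b' c'] [Hv' Hl]; [apply acc_ONZ|].
  simpl in Hl. destruct Hl as [Hl|[E [Hl|[E2 Hl]]]].
  - apply Hlt; [exact Hv' | exact Hl].
  - subst a'. simpl in Hv'. destruct Hv' as (_&_&Hvc'&Hc'). apply IHb; auto; apply Hlt; auto.
  - subst a' b'. simpl in Hv'. destruct Hv' as (_&_&Hvc'&Hc'). apply IHc; auto; split; auto.
Qed.

Lemma acc_valid : forall x, onvalid lt z0 x -> Acc R x.
Proof.
  induction x as [|a IHa b c _]; intros Hv; [apply acc_ONZ|].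
  apply (main _ (IHa (proj1 Hv))); simpl; auto.
Qed.

Lemma min_elt (S : ON W -> Prop) : forall x, onvalid lt z0 x -> S x ->
  exists m, onvalid lt z0 m /\ S m /\ forall y, onvalid lt z0 y -> onlt lt y m -> ~ S y.
Proof.
  intros x Hv HS. assert (A := acc_valid x Hv). revert Hv HS.
  induction A as [x _ IH]; intros Hv HS.
  destruct (classic (exists y, onvalid lt z0 y /\ onlt lt y x /\ S y)) as [[y (Hy1&Hy2&Hy3)]|Hn].
  - apply (IH y); auto. split; auto.
  - exists x; repeat split; auto. intros y Hy Hl HSy; apply Hn; eauto.
Qed.
End H.

Theorem lemma3p3 (W : Type) (lt : W -> W -> Prop) (z0 o1 : W)
  (HW : is_first_uncountable lt) (Hz0 : is_zeroW lt z0) (Ho1 : is_oneW lt z0 o1)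
  (X : W -> Prop) (HX : clubW lt X) (H0X : ~ X z0)
  (Th : ON W -> W) (HTh : Theta_spec lt z0 X Th)
  (n : nat) (xi : W) :
  X xi -> lt xi (Th (Omega_n o1 n)) ->
  exists zeta : ON W, onvalid lt z0 zeta /\ onlt lt zeta (Omega_n o1 n) /\
    xi = Th zeta.
Proof.
  intros HXxi Hlt.
  destruct HW as (Hirr & Htr & Htri & Hwf & _ & _).
  destruct Ho1 as [Hz01 Ho1'].
  assert (Hvn : onvalid lt z0 (Omega_n o1 n)).
  { clear Hlt. induction n; simpl; repeat split; auto. }
  assert (Hsn : star lt z0 (Omega_n o1 n) = o1).
  { assert (Hm : forall a, a = z0 \/ a = o1 -> maxW lt (maxW lt a z0) o1 = o1).
    { intros a [->| ->]; unfold maxW;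
      repeat destruct excluded_middle_informative; auto;
      exfalso; eauto. }
    clear Hlt Hvn. destruct n; simpl. apply Hm; auto.
    induction n; simpl; apply Hm; auto. }
  assert (Hzxi : lt z0 xi).
  { destruct (Htri z0 xi) as [H|[H|H]]; auto. subst; contradiction. exfalso; eapply Hz0; eauto. }
  set (S := fun z => onlt lt z (Omega_n o1 n) /\ lt (star lt z0 z) xi /\ ~ lt (Th z) xi).
  assert (Hne : exists z, onvalid lt z0 z /\ S z).
  { apply NNPP; intro Hn.
    assert (Hall : forall z, onvalid lt z0 z -> onlt lt z (Omega_n o1 n) ->
                    lt (star lt z0 z) xi -> lt (Th z) xi).
    { intros z Hv Hl Hs. apply NNPP; intro Hc. apply Hn. exists z; split; auto. split; auto. }
    destruct (Ho1' xi Hzxi) as [E|Ho1xi].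
    - subst xi. destruct (HTh (ONZ W) I) as [[_ [Hs _]] _]. simpl in Hs.
      assert (Hlt0 : lt (Th (ONZ W)) o1).
      { apply Hall; simpl; auto. destruct n; simpl; auto. }
      destruct (Ho1' _ Hs) as [E|E]. rewrite E in Hlt0; eapply Hirr; eauto.
      eapply Hirr; eauto.
    - destruct (HTh _ Hvn) as [_ Hmin]. apply (Hmin xi); auto.
      split; auto. rewrite Hsn. split; auto. }
  destruct Hne as [z0' [Hv HS]].
  destruct (@min_elt W lt z0 Hwf S z0' Hv HS) as [m (Hvm & (Hm1 & Hm2 & Hm3) & Hmin)].
  exists m; split; auto; split; auto.
  destruct (HTh m Hvm) as [_ Hleast].
  assert (Hn2 : ~ lt xi (Th m)).
  { apply Hleast. split; auto. split; auto.
    intros y Hy Hl Hs. apply NNPP; intro Hc. apply (Hmin y Hy Hl).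
    split; [eapply onlt_trans; eauto|]. split; auto. }
  destruct (Htri xi (Th m)) as [H|[H|H]]; tauto.
Qed.
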